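(* Let $n\in\mathbb{N}$, let $A\subset\mathbb{R}$, let $a\in\mathbb{R}$ with $a\notin\overline{A}$ (the closure of $A$), and let $f:A\cup\{a\}\to\mathbb{R}$. Suppose that for every $k\in\{1,\dots,n\}$ the set $\{[x_1,\dots,x_k;f] : x_1,\dots,x_k\in A \text{ pairwise distinct}\}$ is bounded. Then for every $k\in\{1,\dots,n\}$ the set $\{[x_1,\dots,x_k;f] : x_1,\dots,x_k\in A\cup\{a\} \text{ pairwise distinct}\}$ is bounded.
   Context: For a function $f$ and pairwise distinct points $x_1,\dots,x_m$ of its domain, divided differences are defined recursively by $[x_1;f]:=f(x_1)$ and $[x_1,\dots,x_{m+1};f]:=\dfrac{[x_2,\dots,x_{m+1};f]-[x_1,\dots,x_m;f]}{x_{m+1}-x_1}$; they are symmetric functions of the points. *)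

(* Defs.v *)
From mathcomp Require Import all_boot all_order all_algebra.
From mathcomp Require Import all_classical all_reals topology normedtype.
Set Implicit Arguments. Unset Strict Implicit. Unset Printing Implicit Defensive.
Import Order.TTheory GRing.Theory Num.Theory numFieldNormedType.Exports.
Local Open Scope ring_scope.
Local Open Scope classical_set_scope.

(* divdiff f m x = [x 0, x 1, ..., x m ; f]  (m+1 points), following
   [x1;f] = f x1,
   [x1..x_{m+1};f] = ([x2..x_{m+1};f] - [x1..x_m;f]) / (x_{m+1} - x1). *)
Fixpoint divdiff (R : realType) (f : R -> R) (m : nat) (x : nat -> R) : R :=
  match m with
  | 0 => f (x 0%N)
  | m'.+1 => (divdiff f m' (fun i => x i.+1) - divdiff f m' x) / (x m'.+1 - x 0%N)
  end.

Definition distinct_pts_in (R : realType) (S : set R) (k : nat) (x : nat -> R) : Prop :=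
  (forall i, (i < k)%N -> S (x i)) /\
  (forall i j, (i < k)%N -> (j < k)%N -> i <> j -> x i <> x j).

Definition dd_bounded (R : realType) (f : R -> R) (S : set R) (k : nat) : Prop :=
  exists M : R, forall x : nat -> R, distinct_pts_in S k x -> `|divdiff f k.-1 x| <= M.

(* Main.v *)
Require Import Defs.
From mathcomp Require Import all_boot all_order all_algebra.
From mathcomp Require Import all_classical all_reals topology normedtype.
From mathcomp Require Import ring.
Import Order.TTheory GRing.Theory Num.Theory numFieldNormedType.Exports.
Local Open Scope ring_scope.
Local Open Scope classical_set_scope.

Section Aux.
Variable R : realType.
Variable f : R -> R.

Definition Wt (s : seq R) (y : R) : R := \prod_(j <- s | j != y) (y - j)^-1.
Definition Sm (s : seq R) : R := \sum_(i <- s) f i * Wt s i.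

Lemma Wt_cons y s i : Wt (y :: s) i = (if y != i then (i - y)^-1 else 1) * Wt s i.
Proof. by rewrite /Wt big_cons; case: ifP => _ //; rewrite mul1r. Qed.

Lemma Wt_rcons y s i : Wt (rcons s y) i = Wt s i * (if y != i then (i - y)^-1 else 1).
Proof. by rewrite /Wt big_rcons. Qed.

Lemma Sm_step u v mid : uniq (u :: rcons mid v) ->
  Sm (u :: rcons mid v) = (Sm (rcons mid v) - Sm (u :: mid)) / (v - u).
Proof.
rewrite /= rcons_uniq mem_rcons in_cons negb_or => /andP[/andP[uv umid] /andP[vmid _]].
have vu : v - u != 0 by rewrite subr_eq0 eq_sym.
rewrite /Sm big_cons big_rcons /= big_rcons /= big_cons /=.
rewrite (Wt_cons u (rcons mid v) u) (Wt_cons u (rcons mid v) v) (Wt_cons u mid u).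
rewrite !(Wt_rcons v mid u) !(Wt_rcons v mid v) eqxx /= uv eq_sym uv.
set Wm := Wt mid.
have key : \sum_(j <- mid) f j * Wt (u :: rcons mid v) j
  = (\sum_(j <- mid) f j * Wt (rcons mid v) j
     - \sum_(j <- mid) f j * Wt (u :: mid) j) / (v - u).
  rewrite -sumrB mulr_suml; rewrite big_seq [RHS]big_seq; apply: eq_bigr => i im.
  have ui : u != i by apply: contraNneq umid => ->.
  have vi : v != i by apply: contraNneq vmid => ->.
  rewrite !Wt_cons !Wt_rcons ui vi.
  have h1 : i - u != 0 by rewrite subr_eq0 eq_sym.
  have h2 : i - v != 0 by rewrite subr_eq0 eq_sym.
  by field; rewrite h1 h2 vu.
rewrite key.
have h3 : u - v != 0 by rewrite subr_eq0.
by field; rewrite vu h3.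
Qed.

Lemma map_shift (x : nat -> R) n k :
  map (fun i => x i.+1) (iota k n) = map x (iota k.+1 n).
Proof. by elim: n k => //= n IH k; rewrite IH. Qed.

Lemma dd_S m x : uniq (map x (iota 0 m.+1)) ->
  divdiff f m x = Sm (map x (iota 0 m.+1)).
Proof.
elim: m x => [|m IH] x hu.
  by rewrite /Sm /= big_cons big_nil /Wt big_cons eqxx big_nil /= mulr1 addr0.
have e1 : map x (iota 0 m.+2) = x 0%N :: rcons (map x (iota 1 m)) (x m.+1).
  have -> : iota 0 m.+2 = 0%N :: iota 1 (m + 1) by rewrite addn1.
  by rewrite iotaD /= map_cat cats1 /= add1n.
have e2 : map (fun i => x i.+1) (iota 0 m.+1) = rcons (map x (iota 1 m)) (x m.+1).
  by rewrite map_shift -[m.+1]addn1 (iotaD 1 m 1) map_cat -cats1 addnC.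
have e3 : map x (iota 0 m.+1) = x 0%N :: map x (iota 1 m) by [].
rewrite e1 in hu *.
have hu' := hu.
move: hu' => /= /andP[nin urm].
have u2 : uniq (x 0%N :: map x (iota 1 m)).
  move: urm nin; rewrite rcons_uniq mem_rcons in_cons negb_or /=.
  by move=> /andP[_ ->] /andP[_ ->].
have d1 := IH (fun i => x i.+1); rewrite e2 in d1.
have d2 := IH x; rewrite e3 in d2.
by rewrite Sm_step // d1 // d2.
Qed.

Lemma Sm_perm s t : perm_eq s t -> Sm s = Sm t.
Proof.
move=> pst; rewrite /Sm (perm_big t pst); apply: eq_bigr => i _.
by rewrite /Wt (perm_big t pst).
Qed.
End Aux.

Definition sw (p q i : nat) : nat := if i == p then q else if i == q then p else i.

Lemma swK p q : involutive (sw p q).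
Proof.
move=> i; unfold sw.
case: (eqVneq i p) => [->|ip]; first by rewrite eqxx; case: eqVneq.
case: (eqVneq i q) => [->|iq]; first by rewrite eqxx.
by rewrite (negbTE ip) (negbTE iq).
Qed.

Lemma sw_lt p q N i : (p < N)%N -> (q < N)%N -> (i < N)%N -> (sw p q i < N)%N.
Proof. by move=> hp hq hi; unfold sw; repeat case: ifP. Qed.

Lemma perm_sw (R : realType) (x : nat -> R) p q N : (p < N)%N -> (q < N)%N ->
  perm_eq (map (fun i => x (sw p q i)) (iota 0 N)) (map x (iota 0 N)).
Proof.
move=> hp hq.
rewrite (map_comp x (sw p q)); apply: perm_map; apply: uniq_perm.
- by rewrite map_inj_uniq ?iota_uniq //; apply: can_inj (swK p q).
- exact: iota_uniq.
move=> i; apply/mapP/idP.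
  by move=> [j]; rewrite !mem_iota /= !add0n => hj ->; apply: sw_lt.
move=> hi; exists (sw p q i); last by rewrite swK.
by move: hi; rewrite !mem_iota /= !add0n; apply: sw_lt.
Qed.

Lemma uniq_dist (R : realType) (S : set R) k x : distinct_pts_in S k x ->
  uniq (map x (iota 0 k)).
Proof.
move=> [_ hd]; rewrite map_inj_in_uniq ?iota_uniq //.
move=> i j; rewrite !mem_iota /= !add0n => hi hj e.
apply/eqP; apply: contraT => /eqP ne; exfalso; exact: (hd i j hi hj ne e).
Qed.

Theorem lemma1 (R : realType) (n : nat) (A : set R) (a : R) (f : R -> R) :
  ~ closure A a ->
  (forall k : nat, (1 <= k <= n)%N -> dd_bounded f A k) ->
  forall k : nat, (1 <= k <= n)%N -> dd_bounded f (A `|` [set a]) k.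
Proof.
move=> hcl hA.
have [e e0 he] : exists2 e : R, 0 < e & forall y, A y -> e <= `|y - a|.
  apply: contrapT => hne; apply: hcl => B /nbhs_ballP [e e0 hb].
  apply: contrapT => hB; apply: hne; exists e => // y Ay.
  rewrite leNgt; apply/negP => hlt; apply: hB; exists y; split => //.
  by apply: hb; rewrite -ball_normE /= distrC.
elim=> [|k IH] //; case: k IH => [|m] IH hk.
  have [M hM] := hA 1%N hk.
  exists (Num.max M `|f a|) => x [hin hd] /=.
  rewrite le_max; apply/orP.
  case: (hin 0%N isT) => [hx|hx]; last by right; rewrite hx.
  left; apply: (hM x); split; first by move=> i; rewrite ltnS leqn0 => /eqP ->.
  by move=> i j; rewrite !ltnS !leqn0 => /eqP -> /eqP ->.
have hk1 : (1 <= m.+1 <= n)%N by move: hk => /andP[_ /ltnW ->].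
have [C hC] := IH hk1.
have [M1 hM1] := hA m.+1 hk1.
have [M2 hM2] := hA m.+2 hk.
exists (Num.max M2 ((C + M1) / e)) => x [hin hd].
rewrite le_max; apply/orP.
have [[p [hp xpa]] | nex] := pselect (exists p, (p < m.+2)%N /\ x p = a); last first.
  left; apply: hM2; split => // i hi.
  case: (hin i hi) => // hx; exfalso; apply: nex; by exists i.
right.
set y := fun i => x (sw p m.+1 i).
have hyd : distinct_pts_in (A `|` [set a]) m.+2 y.
  split => [i hi|i j hi hj ij]; first by apply: hin; apply: sw_lt.
  apply: hd; try by apply: sw_lt.
  by move=> e'; apply: ij; rewrite -(swK p m.+1 i) e' swK.
have exy : divdiff f m.+1 x = divdiff f m.+1 y.
  have u1 := uniq_dist _ _ _ _ hyd; have u2 := uniq_dist _ _ _ _ (conj hin hd).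
  rewrite !dd_S //.
  by apply: Sm_perm; rewrite perm_sym; apply: perm_sw.
have ya : y m.+1 = a by rewrite /y /sw eqxx; case: eqVneq => [->|].
have yA : forall i, (i < m.+1)%N -> A (y i).
  move=> i hi.
  have hi' : (i < m.+2)%N by apply: ltnW.
  case: (proj1 hyd i hi') => // hyi.
  exfalso; have : i = m.+1.
    have : y i = y m.+1 by rewrite ya hyi.
    by apply: contra_eq => /eqP ne; apply/eqP; apply: (proj2 hyd) => //.
  by move=> ie; rewrite ie ltnn in hi.
rewrite exy /=.
have h1 : `|divdiff f m (fun i => y i.+1)| <= C.
  apply: hC; split => [i hi|i j hi hj ij]; first exact: (proj1 hyd).
  by apply: (proj2 hyd) => // -[].
have h2 : `|divdiff f m y| <= M1.
  apply: hM1; split => [i hi|i j hi hj ij]; first exact: yA.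
  by apply: (proj2 hyd) => //; apply: ltnW.
have h3 : e <= `|y m.+1 - y 0%N|.
  by rewrite ya distrC; apply: he; apply: yA.
have hD : 0 < `|y m.+1 - y 0%N| by apply: lt_le_trans h3.
rewrite normrM normfV; apply: ler_pM.
- exact: normr_ge0.
- by rewrite invr_ge0 normr_ge0.
- by apply: le_trans (ler_normB _ _) _; apply: lerD.
- by rewrite lef_pV2 ?posrE.
Qed.
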